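(* Let $n\ge2$ and let $A[0],\dots,A[n-1]$ be integers with $0=A[0]<A[1]<\cdots<A[n-1]=M$, and assume $2A[i]\le A[2i]$ for all $i$ with $2i\le n-1$. Let $D=Mn+1$. Consider the $0/1$-Knapsack instance with capacity $2n-1$ and the following items (weight, value): for $i=1,\dots,n-1$, an item $(i,\,2A[i])$; for each $i\in\{0,\dots,n-1\}\setminus\{1\}$, an item $(2n-1-i,\,2(D-A[i]))$; and an item $(2n-2,\,2(D-A[1])+1)$. Then the optimal value of this instance is odd if and only if $A$ is super-additive, i.e. $A[i]+A[j]\le A[i+j]$ for all $i,j\ge0$ with $i+j\le n-1$.
   Context: $0/1$-Knapsack: given items $(w_i,v_i)$ and capacity $t$, the optimal value is $\max\sum_{i\in I}v_i$ over subsets $I$ of items with $\sum_{i\in I}w_i\le t$ (each item used at most once). *)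

(* Defs.v *)
From mathcomp Require Import all_boot.
Set Implicit Arguments. Unset Strict Implicit. Unset Printing Implicit Defensive.

Definition knapsack_opt (items : seq (nat * nat)) (t : nat) : nat :=
  \max_(S : {set 'I_(size items)} |
          \sum_(i in S) (nth (0,0) items i).1 <= t)
     \sum_(i in S) (nth (0,0) items i).2.

Definition reduction_items (n : nat) (A : nat -> nat) : seq (nat * nat) :=
  let M := A n.-1 in
  let D := M * n + 1 in
  [seq (i, 2 * A i) | i <- iota 1 n.-1]
  ++ [seq (2 * n - 1 - i, 2 * (D - A i)) | i <- iota 0 n & i != 1]
  ++ [:: (2 * n - 2, 2 * (D - A 1) + 1)].

Definition super_additive (n : nat) (A : nat -> nat) : Prop :=
  forall i j, i + j <= n - 1 -> A i + A j <= A (i + j).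

(* Main.v *)
Require Import Defs.
From mathcomp Require Import all_boot zify.
Definition Dn n (A : nat -> nat) := A n.-1 * n + 1.
Definition bigi n k := if k == n.-1 then 0 else k - n.-1 + 1.
Definition itm n A k :=
  if k < n.-1 then (k.+1, 2 * A k.+1)
  else if k < 2*n-2 then (2*n-1 - bigi n k, 2*(Dn n A - A (bigi n k)))
  else (2*n-2, 2*(Dn n A - A 1)+1).



Lemma filt m : [seq i <- iota 0 m.+2 | i != 1] = 0 :: iota 2 m.
Proof.
rewrite /=; congr (_ :: _); apply/all_filterP; apply/allP => x; rewrite mem_iota; lia.
Qed.

Lemma size_items n A : 2 <= n -> size (reduction_items n A) = 2*n-1.
Proof.
case: n => [|[|m]] // _.
rewrite /reduction_items filt !size_cat /= !size_map !size_iota /=. lia.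
Qed.

Lemma nth_items n A k : 2 <= n -> k < 2*n-1 ->
  nth (0,0) (reduction_items n A) k = itm n A k.
Proof.
case: n => [|[|m]] // _ hk.
rewrite /reduction_items filt /itm /Dn; cbv zeta.
rewrite nth_cat size_map size_iota.
case: ifP => h1.
  by rewrite (nth_map 0) ?size_iota // nth_iota.
rewrite nth_cat /= size_map size_iota.
case: ifP => h2.
  have kb : k < 2 * m.+2 - 2 by lia.
  rewrite kb /bigi.
  case E: (k - m.+1) => [|j] /=.
    have -> : k = m.+1 by lia.
    by rewrite eqxx.
  have -> : (k == m.+1) = false by lia.
  rewrite (nth_map 0) ?size_iota; last lia.
  rewrite nth_iota; last lia.
  by have -> : j.+1 + 1 = 2 + j by lia.
have -> : k - m.+1 - m.+1 = 0 by lia.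
have -> : k < 2 * m.+2 - 2 = false by lia.
by [].
Qed.

Lemma sa_seq (B : nat -> nat) m (I : Type) (r : seq I) (P : pred I) (w : I -> nat) :
  B 0 = 0 -> (forall i j, i + j <= m -> B i + B j <= B (i + j)) ->
  \sum_(i <- r | P i) w i <= m ->
  \sum_(i <- r | P i) B (w i) <= B (\sum_(i <- r | P i) w i).
Proof.
move=> B0 sa; elim: r => [|a r IH]; rewrite ?big_nil ?big_cons ?B0 //.
case: (P a) => // h.
apply: leq_trans (sa _ _ h); rewrite leq_add2l; apply: IH.
by apply: leq_trans h; apply: leq_addl.
Qed.

Lemma monoA n (A : nat -> nat) : (forall i, i.+1 <= n - 1 -> A i < A i.+1) ->
  forall x y, x <= y -> y <= n - 1 -> A x <= A y.
Proof.
move=> inc x; elim=> [|y IH] hxy hy.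
  by move: hxy; rewrite leqn0 => /eqP ->.
case: (ltngtP x y.+1) hxy => // [h|->] _.
  apply: leq_trans (IH h (ltnW hy)) (ltnW (inc _ hy)).
done.
Qed.

Lemma sum_small N (S : {set 'I_N}) (F : nat -> nat) c m : m <= N ->
  (forall i : 'I_N, i \in S -> i < m /\ F i <= c) -> \sum_(i in S) F i <= m * c.
Proof.
move=> mN H.
apply: (@leq_trans (\sum_(i < N) (if i < m then c else 0))).
  rewrite big_mkcond /=; apply: leq_sum => i _.
  case: ifP => h //; by have [-> h2] := H i h.
rewrite -(big_mkord xpredT (fun i => if i < m then c else 0)).
rewrite (@big_cat_nat _ _ _ m) /=; [|by []|by []].
rewrite (@eq_big_nat _ _ _ 0 m _ (fun _ => c)); last by move=> i /andP [_ ->].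
rewrite (@eq_big_nat _ _ _ m N _ (fun _ => 0)); last by move=> i /andP [h _]; rewrite ltnNge h.
by rewrite !sum_nat_const_nat muln0 addn0 subn0.
Qed.

Theorem mainTheorem16 (n : nat) (A : nat -> nat) :
  2 <= n ->
  A 0 = 0 ->
  (forall i, i.+1 <= n - 1 -> A i < A i.+1) ->
  (forall i, 2 * i <= n - 1 -> 2 * A i <= A (2 * i)) ->
  odd (knapsack_opt (reduction_items n A) (2 * n - 1)) <-> super_additive n A.
Proof.
move=> n2 A0 inc dbl.
have mono := @monoA n A inc.
set M := A n.-1.
have AM : forall k, k <= n - 1 -> A k <= M.
  by move=> k hk; apply: mono => //; rewrite -subn1.
have MMn : M <= M * n by apply: leq_pmulr; lia.
have A1M : A 1 <= M by apply: AM; lia.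
rewrite /knapsack_opt.
set items := reduction_items n A.
have sz : size items = 2 * n - 1 by apply: size_items.
have nthE : forall i : 'I_(size items), nth (0,0) items i = itm n A i.
  by move=> i; apply: nth_items => //; rewrite -sz.
set D := Dn n A.
have DE : D = M * n + 1 by [].
have itm_small : forall k, k < n.-1 -> itm n A k = (k.+1, 2 * A k.+1).
  by move=> k h; rewrite /itm h.
have bigi_le : forall k, n.-1 <= k -> k < 2 * n - 2 -> bigi n k <= n - 1.
  move=> k h1 h2; rewrite /bigi; case: ifP => _; lia.
have itm_big : forall k, n.-1 <= k -> k < 2 * n - 2 ->
    itm n A k = (2*n-1 - bigi n k, 2*(D - A (bigi n k))).
  move=> k h1 h2; rewrite /itm ifF ?h2 //; lia.
have itm_spec : itm n A (2 * n - 2) = (2*n-2, 2*(D - A 1)+1).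
  rewrite /itm ifF ?ifF //; lia.
have A1D : A 1 <= D by rewrite DE; apply: leq_trans A1M (leq_trans MMn (leq_addr _ _)).
have AD : forall k, k <= n - 1 -> A k <= D.
  by move=> k hk; rewrite DE; apply: leq_trans (AM k hk) (leq_trans MMn (leq_addr _ _)).
clearbody D M.
have bound : forall S : {set 'I_(size items)},
    \sum_(i in S) (nth (0,0) items i).1 <= 2*n-1 ->
    odd (\sum_(i in S) (nth (0,0) items i).2) \/ super_additive n A ->
    \sum_(i in S) (nth (0,0) items i).2 <= 2 * D + 1.
  move=> S.
  have eW : \sum_(i in S) (nth (0,0) items i).1 = \sum_(i in S) (itm n A i).1.
    by apply: eq_bigr => i _; rewrite nthE.
  have eV : \sum_(i in S) (nth (0,0) items i).2 = \sum_(i in S) (itm n A i).2.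
    by apply: eq_bigr => i _; rewrite nthE.
  rewrite eW eV.
  case: (boolP [exists i in S, n.-1 <= nat_of_ord i]) => [/existsP [b /andP [bS bb]] | nob].
  - move=> hW; rewrite !(big_setD1 b bS) /= in hW *.
    set T := S :\ b in hW *.
    have TE : T = S :\ b by [].
    clearbody T.
    have bN : nat_of_ord b < 2 * n - 1 by rewrite -sz; exact: ltn_ord.
    have wbig : forall k, n.-1 <= k -> k < 2 * n - 1 -> n <= (itm n A k).1.
      move=> k h1 h2; case: (ltngtP k (2*n-2)) => h3.
      + rewrite itm_big //=; have := bigi_le k h1 h3; lia.
      + lia.
      + rewrite h3 itm_spec /=; lia.
    have Tsmall : forall c, c \in T -> nat_of_ord c < n.-1.
      move=> c cT; rewrite ltnNge; apply/negP => cb.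
      move: hW; rewrite (big_setD1 c cT) /=.
      have cN : nat_of_ord c < 2 * n - 1 by rewrite -sz; exact: ltn_ord.
      have := wbig _ bb bN; have := wbig _ cb cN.
      lia.
    have VT : \sum_(i in T) (itm n A i).2 = \sum_(i in T) 2 * A (itm n A i).1.
      by apply: eq_bigr => i iT; rewrite itm_small //; apply: Tsmall.
    rewrite VT.
    case: (ltngtP (nat_of_ord b) (2*n-2)) => hb; last first.
    + rewrite hb itm_spec /= in hW *.
      move=> _.
      have WT : \sum_(i in T) (itm n A i).1 <= 1.
        by rewrite -(leq_add2l (2*n-2)); apply: leq_trans hW _; lia.
      have := @sa_seq (fun x => 2 * A x) 1 _ _ _ _ _ _ WT.
      move=> /(_ _ _) h.
      have {}h : \sum_(i in T) 2 * A (itm n A i).1 <= 2 * A (\sum_(i in T) (itm n A i).1).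
        apply: h; first by rewrite A0.
        move=> i j hij; case: i hij => [|[|i]] hij; rewrite ?A0 ?add0n ?addn0 //.
        by case: j hij => [|j]; rewrite ?A0 ?addn0 //; lia.
      have := mono _ _ WT (ltac:(lia)).
      move=> hA; apply: leq_trans (leq_add (leqnn _) h) _. lia.
    + lia.
    + rewrite itm_big //= in hW *.
      have bl := bigi_le _ bb hb.
      set i := bigi n b in hW bl *.
      have Ai : A i <= M by apply: AM.
      case=> [hodd|sa].
        by move: hodd; rewrite -big_distrr /= oddD !oddM.
      have WTi : \sum_(j in T) (itm n A j).1 <= i.
        by rewrite -(leq_add2l (2*n-1-i)); apply: leq_trans hW _; lia.
      have WT : \sum_(j in T) (itm n A j).1 <= n - 1 := leq_trans WTi bl.
      have := @sa_seq (fun x => 2 * A x) (n - 1) _ _ _ _ _ _ WT.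
      move=> /(_ _ _) h.
      have {}h : \sum_(i in T) 2 * A (itm n A i).1 <= 2 * A (\sum_(i in T) (itm n A i).1).
        apply: h; first by rewrite A0.
        move=> x y hxy; have := sa x y hxy; lia.
      have := mono _ _ WTi bl.
      have AiD := AD i bl.
      move=> hA; apply: leq_trans (leq_add (leqnn _) h) _. lia.
  - move=> _ _.
    apply: leq_trans (@sum_small _ S (fun k => (itm n A k).2) (2 * M) n.-1 _ _) _.
    + rewrite sz; lia.
    + move=> i iS; have ib : nat_of_ord i < n.-1.
        rewrite ltnNge; apply/negP => h; move/negP: nob; apply.
        by apply/existsP; exists i; rewrite iS h.
      split => //; rewrite itm_small //=.
      have := AM i.+1 (ltac:(lia)); lia.
    + rewrite DE; nia.
have o0 : 0 < size items by rewrite sz; lia.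
have oc : 2*n-2 < size items by rewrite sz; lia.
pose a := Ordinal o0; pose c := Ordinal oc.
have ac : a \notin [set c] by rewrite inE; apply/eqP => /(congr1 val) /=; lia.
pose S0 := [set a; c].
have PS0 : \sum_(i in S0) (nth (0,0) items i).1 <= 2*n-1.
  rewrite big_setU1 // big_set1 !nthE /= itm_small /=; last lia.
  rewrite itm_spec /=; lia.
have VS0 : \sum_(i in S0) (nth (0,0) items i).2 = 2*D+1.
  rewrite big_setU1 // big_set1 !nthE /= itm_small /=; last lia.
  rewrite itm_spec /=; lia.
set P := fun S : {set 'I_(size items)} => \sum_(i in S) (nth (0,0) items i).1 <= 2*n-1.
set V := fun S : {set 'I_(size items)} => \sum_(i in S) (nth (0,0) items i).2.
have ge : forall S, P S -> V S <= \max_(S | P S) V S.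
  by move=> S PS; apply: leq_bigmax_cond.
change (odd (\max_(S | P S) V S) <-> super_additive n A).
split.
- move=> hodd.
  have cP : 0 < #|(fun S => P S)| by apply/card_gt0P; exists S0.
  have [S1 PS1 E] := @eq_bigmax_cond _ (fun S => P S) V cP.
  have hopt : (\max_(S | P S) V S) = V S1 := E.
  have hle : \max_(S | P S) V S <= 2 * D + 1.
    rewrite hopt; apply: bound => //; left; by move: hodd; rewrite hopt.
  move=> i j hij; rewrite leqNgt; apply/negP => viol.
  case: i hij viol => [|i'] hij viol; first by move: viol; rewrite A0 !add0n ltnn.
  case: j hij viol => [|j'] hij viol; first by move: viol; rewrite A0 !addn0 ltnn.
  case: (eqVneq i' j') => [eij|nij].
    subst j'; have := dbl i'.+1 (ltac:(lia)).
    have -> : 2 * i'.+1 = i'.+1 + i'.+1 by lia.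
    lia.
  have oi' : i' < size items by rewrite sz; lia.
  have oj' : j' < size items by rewrite sz; lia.
  have ob' : n.-1 + i' + j' + 1 < size items by rewrite sz; lia.
  pose oi := Ordinal oi'; pose oj := Ordinal oj'; pose ob := Ordinal ob'.
  have n1 : oi \notin oj |: [set ob].
    rewrite !inE; apply/norP; split; apply/eqP => /(congr1 val) /=; lia.
  have n2' : oj \notin [set ob].
    rewrite !inE; apply/eqP => /(congr1 val) /=; lia.
  pose S2 := oi |: (oj |: [set ob]).
  have hbi : bigi n (n.-1 + i' + j' + 1) = i'.+1 + j'.+1.
    rewrite /bigi ifF; lia.
  have hib : itm n A (n.-1 + i' + j' + 1) = (2*n-1 - (i'.+1 + j'.+1), 2*(D - A (i'.+1 + j'.+1))).
    rewrite itm_big ?hbi //; lia.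
  have PS2 : \sum_(i in S2) (nth (0,0) items i).1 <= 2*n-1.
    rewrite /S2 big_setU1 // big_setU1 // big_set1 !nthE /=.
    rewrite (itm_small i'); last lia.
    rewrite (itm_small j'); last lia.
    rewrite hib /=; lia.
  have VS2 : 2 * D + 2 <= \sum_(i in S2) (nth (0,0) items i).2.
    rewrite /S2 big_setU1 // big_setU1 // big_set1 !nthE /=.
    rewrite (itm_small i'); last lia.
    rewrite (itm_small j'); last lia.
    rewrite hib /=.
    have := AD (i'.+1 + j'.+1) hij; lia.
  have := leq_trans VS2 (ge S2 PS2); lia.
- move=> sa.
  have hle : \max_(S | P S) V S <= 2 * D + 1.
    by apply/bigmax_leqP => S PS; apply: bound => //; right.
  have := ge S0 PS0; rewrite /V VS0 => hge.
  have -> : \max_(S | P S) V S = 2 * D + 1 by apply/eqP; rewrite eqn_leq hle hge.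
  by rewrite oddD oddM.
Qed.
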